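(* Let $P_1\ge P_2\ge\cdots\ge P_K\ge0$ with $P_1>0$. For any nonempty set $A\subseteq\{1,\dots,K\}$ with $l=\min A$, $$\frac12\log\left(1+\Big(\sum_{j\in A}\sqrt{P_j}\Big)^2\right)-\left[\frac12\log\left(\Big(\frac1{\sum_{j=1}^KP_j}+1\Big)P_l\right)\right]^+\le\log K.$$
   Context: Logarithms are base 2, $[x]^+=\max\{x,0\}$, and $[\log 0]^+=0$. *)

(* Defs.v *)
From HB Require Import structures.
From mathcomp Require Import all_boot all_order all_algebra.
From mathcomp Require Import reals exp.
Set Implicit Arguments. Unset Strict Implicit. Unset Printing Implicit Defensive.
Import Order.TTheory GRing.Theory Num.Theory.
Local Open Scope ring_scope.

Definition log2 {R : realType} (x : R) : R := ln x / ln 2.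

Definition posp {R : realType} (x : R) : R := Num.max x 0.

(* [ (1/2) log y ]^+, with the convention [log 0]^+ = 0. *)
Definition poshalflog {R : realType} (y : R) : R :=
  if y == 0 then 0 else posp (2^-1 * log2 y).

(* Main.v *)
Require Import Defs.
From HB Require Import structures.
From mathcomp Require Import all_boot all_order all_algebra.
From mathcomp Require Import reals exp.
From mathcomp Require Import lra zify.
Import Order.TTheory GRing.Theory Num.Theory.
Local Open Scope ring_scope.

Theorem lemma5 (R : realType) (K : nat) (hK : (0 < K)%N) (P : 'I_K -> R)
  (Pnonincr : forall i j : 'I_K, (i <= j)%N -> P j <= P i)
  (Pnonneg : forall i : 'I_K, 0 <= P i)
  (P1pos : 0 < P (Ordinal hK))
  (A : {set 'I_K}) (l : 'I_K)
  (hl : l \in A) (hlmin : forall j : 'I_K, j \in A -> (l <= j)%N) :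
  2^-1 * log2 (1 + (\sum_(j in A) Num.sqrt (P j)) ^+ 2)
    - poshalflog (((\sum_(j < K) P j)^-1 + 1) * P l)
  <= log2 (K%:R : R).
Proof.
set S := \sum_(j in A) _.
set T := \sum_(j < K) P j.
set p := P l.
have p0 : 0 <= p by apply: Pnonneg.
have S0 : 0 <= S by apply: sumr_ge0 => j _; apply: sqrtr_ge0.
have hS : S <= (K - l)%:R * Num.sqrt p.
  apply: (le_trans (y := \sum_(j < K | true && (l <= j)%N) Num.sqrt p)).
    rewrite /S big_mkcond [X in _ <= X]big_mkcond /=.
    apply: ler_sum => j _.
    case: ifP => jA.
      rewrite (hlmin j jA) ler_sqrt //; exact: Pnonincr (hlmin j jA).
    by case: ifP => _ //; apply: sqrtr_ge0.
  by rewrite -(@big_geq_mkord _ 0 +%R l K xpredT (fun _ => Num.sqrt p)) sumr_const_nat mulr_natl.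
have leT : forall i : 'I_K, P i <= T.
  move=> i; rewrite /T (bigD1 i) //= lerDl; apply: sumr_ge0 => j _; exact: Pnonneg.
have T0 : 0 < T by apply: lt_le_trans P1pos (leT _).
have pT : p <= T by apply: leT.
set q := p / T.
have q0 : 0 <= q by rewrite /q divr_ge0 // ltW.
have q1 : q <= 1 by rewrite /q ler_pdivrMr // mul1r.
have hy : (T^-1 + 1) * p = p + q by rewrite /q; lra.
rewrite hy.
set k : R := K%:R.
have k1 : 1 <= k by rewrite /k ler1n.
set n : R := (K - l)%:R.
have n0 : 0 <= n by rewrite /n ler0n.
have S2 : S ^+ 2 <= n ^+ 2 * p.
  have sq : Num.sqrt p ^+ 2 = p by rewrite sqr_sqrtr.
  rewrite -sq -exprMn; apply: lerXn2r => //; rewrite ?nnegrE //.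
  by apply: mulr_ge0 => //; apply: sqrtr_ge0.
set M := Num.max 1 (p + q).
have key : 1 + S ^+ 2 <= k ^+ 2 * M.
  have hM1 : 1 <= M by rewrite /M le_max lexx.
  have hM2 : p + q <= M by rewrite /M le_max lexx orbT.
  case: (posnP (nat_of_ord l)) => hl0.
  - have nk : n = k by rewrite /n /k hl0 subn0.
    have Tk : T <= k * p.
      apply: (le_trans (y := \sum_(j < K) p)).
        apply: ler_sum => j _; apply: Pnonincr; by rewrite hl0.
      by rewrite sumr_const card_ord /k mulr_natl.
    have kq : 1 <= k * q.
      rewrite /q mulrA ler_pdivlMr //; lra.
    rewrite nk in S2.
    case: (lerP 1 (p + q)) => hy1.
    + have : k ^+ 2 * (p + q) <= k ^+ 2 * M by apply: ler_wpM2l => //; apply: exprn_ge0; lra.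
      have : k <= k ^+ 2 * q by rewrite expr2 -mulrA ler_peMr //; lra.
      rewrite expr2 in S2 *; nra.
    + have : k ^+ 2 <= k ^+ 2 * M by rewrite ler_peMr //; apply: exprn_ge0; lra.
      have : k <= k ^+ 2 * q by rewrite expr2 -mulrA ler_peMr //; lra.
      rewrite expr2 in S2 *; nra.
  - have nk : n <= k - 1.
      rewrite /n /k lerBrDr natr1 ler_nat.
      have := ltn_ord l; rewrite lt0n in hl0; move: hl0 => /eqP; lia.
    case: (lerP 1 (p + q)) => hy1.
    + have : k ^+ 2 * (p + q) <= k ^+ 2 * M by apply: ler_wpM2l => //; apply: exprn_ge0; lra.
      have : n ^+ 2 <= k ^+ 2 - 1 by rewrite !expr2; nra.
      rewrite !expr2 in S2 *; nra.
    + have : k ^+ 2 <= k ^+ 2 * M by rewrite ler_peMr //; apply: exprn_ge0; lra.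
      have : n ^+ 2 <= k ^+ 2 - 1 by rewrite !expr2; nra.
      rewrite !expr2 in S2 *; nra.
have ln2 : 0 < ln (2 : R) by apply: ln_gt0; lra.
have iln2 : 0 < (ln (2 : R))^-1 by rewrite invr_gt0.
have hM1 : 1 <= M by rewrite /M le_max lexx.
have M0 : 0 < M by lra.
have y0 : 0 <= p + q by lra.
have ph : poshalflog (p + q) = 2^-1 * log2 M.
  rewrite /poshalflog /posp /log2 /M.
  case: eqP => [->|yn0].
    by rewrite (_ : Num.max 1 0 = 1 :> R) ?ln1 ?mul0r ?mulr0 // max_l //; lra.
  have ypos : 0 < p + q by rewrite lt_neqAle eq_sym y0 andbT; apply/eqP.
  case: (lerP 1 (p + q)) => hy1.
    apply/max_idPl.
    apply: mulr_ge0; first lra.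
    by apply: divr_ge0; [apply: ln_ge0 | lra].
  rewrite ln1 mul0r mulr0.
  apply/max_idPr.
  have : ln (p + q) < 0 by apply: ln_lt0; rewrite ypos.
  nra.
rewrite ph /log2.
have k0 : 0 < k by lra.
have hln : ln (1 + S ^+ 2) <= ln k *+ 2 + ln M.
  rewrite -lnXn // -lnM ?posrE ?exprn_gt0 //.
  rewrite ler_ln ?posrE //; last by apply: mulr_gt0 => //; apply: exprn_gt0.
  have : 0 <= S ^+ 2 by apply: exprn_ge0.
  lra.
rewrite mulr2n in hln.
nra.
Qed.
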